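(* Let $\mathcal{A}$ be a state tomography algorithm that, given $n$ copies of $\rho\in\mathbb{C}^{d\times d}$ and a parameter $\varepsilon$, outputs an estimate $\widehat{\rho}$ (a quantum state) achieving infidelity $1 - F(\rho,\widehat\rho) \le \varepsilon \le 1/2$. Then letting $\rho' = \Delta_{2\varepsilon}(\widehat{\rho})$, we have $D_{KL}(\rho\|\rho') \le 16\varepsilon\,(2 + \ln(d/(2\varepsilon)))$.
   Context: The fidelity is $F(\rho,\sigma) = \|\sqrt\rho\sqrt\sigma\|_1$ (trace norm), and infidelity is $1-F(\rho,\sigma)$. For $0\le\epsilon\le 1$, the depolarizing channel is $\Delta_\epsilon(\rho) = (1-\epsilon)\rho + \epsilon I/d$. $D_{KL}(\rho\|\sigma) = \mathrm{tr}(\rho(\ln\rho-\ln\sigma))$. *)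

(* Defs.v *)
From HB Require Import structures.
From mathcomp Require Import all_boot all_order all_algebra.
From mathcomp Require Import sesquilinear spectral.
From mathcomp Require Import complex.
From mathcomp Require Import reals exp.

Set Implicit Arguments.
Unset Strict Implicit.
Unset Printing Implicit Defensive.

Import Order.TTheory GRing.Theory Num.Theory ComplexField.
Local Open Scope ring_scope.
Local Open Scope complex_scope.

Section QI.
Variable R : realType.
Local Notation C := (R[i]).

Definition adjmx m n (A : 'M[C]_(m, n)) : 'M[C]_(n, m) := map_mx (@Num.conj C) (A ^T).

Definition psdmx n (A : 'M[C]_n) : Prop :=
  A \is hermsymmx /\ forall v : 'rV[C]_n, 0 <= (v *m A *m adjmx v) 0 0.

Definition density n (rho : 'M[C]_n) : Prop := psdmx rho /\ \tr rho = 1.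

(* functional calculus f(A) for a Hermitian (normal) matrix A, applying the
   real function f to the (real) eigenvalues in a spectral decomposition
   A = U^-1 diag(lambda) U with U unitary (from mathcomp's spectral.v). *)
Definition mxfun n (f : R -> R) (A : 'M[C]_n) : 'M[C]_n :=
  invmx (spectralmx A)
  *m diag_mx (map_mx (fun z : C => (f (complex.Re z))%:C) (spectral_diag A))
  *m spectralmx A.

Definition msqrt n (A : 'M[C]_n) := mxfun (@Num.sqrt R) A.
Definition mlog n (A : 'M[C]_n) := mxfun (@ln R) A.

Definition trace_norm n (X : 'M[C]_n) : R := complex.Re (\tr (msqrt (adjmx X *m X))).

Definition fidelity n (rho sigma : 'M[C]_n) : R :=
  trace_norm (msqrt rho *m msqrt sigma).

Definition depolarize n (eps : R) (rho : 'M[C]_n) : 'M[C]_n :=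
  ((1 - eps)%:C) *: rho + ((eps / n%:R)%:C) *: 1%:M.

Definition DKL n (rho sigma : 'M[C]_n) : R :=
  complex.Re (\tr (rho *m (mlog rho - mlog sigma))).

End QI.

(* Main.v *)
Require Import Defs.
From HB Require Import structures.
From mathcomp Require Import all_boot all_order all_algebra.
From mathcomp Require Import sesquilinear spectral.
From mathcomp Require Import complex.
From mathcomp Require Import reals exp.
From mathcomp Require Import ring lra.
Import Order.TTheory GRing.Theory Num.Theory ComplexField.
Local Open Scope ring_scope.

Module HelpersG.
Import Num.Def.
Local Set Implicit Arguments.
Local Unset Strict Implicit.
Local Open Scope sesquilinear_scope.
Section Gen1.
Variable C : numClosedFieldType.

Lemma adjM m n p (A : 'M[C]_(m, n)) (B : 'M[C]_(n, p)) : (A *m B)^t* = B^t* *m A^t*.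
Proof. by rewrite trmx_mul map_mxM. Qed.

Lemma adjD m n (A B : 'M[C]_(m, n)) : (A + B)^t* = A^t* + B^t*.
Proof. by rewrite linearD /= map_mxD. Qed.

Lemma adj1 n : (1%:M : 'M[C]_n)^t* = 1%:M.
Proof. by rewrite trmx1 map_mx1. Qed.

Lemma adj_diag n (a : 'rV[C]_n) : (diag_mx a)^t* = diag_mx (map_mx conjC a).
Proof. by rewrite tr_diag_mx map_diag_mx. Qed.

Lemma unitary_tmul n (U : 'M[C]_n) : U \is unitarymx -> U^t* *m U = 1%:M.
Proof. by move=> Uu; have := mulmxKtV (1%:M : 'M[C]_n) Uu erefl; rewrite mul1mx. Qed.

Lemma unitary_mul n (U : 'M[C]_n) : U \is unitarymx -> U *m U^t* = 1%:M.
Proof. by move/unitarymxP. Qed.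

Lemma herm_adj n (A : 'M[C]_n) : A \is hermsymmx -> A^t* = A.
Proof. by rewrite qualifE => /eqP {2}->; rewrite expr0 scale1r. Qed.

Lemma spectral_herm n (A : 'M[C]_n) : A \is hermsymmx ->
  A = (spectralmx A)^t* *m diag_mx (spectral_diag A) *m spectralmx A.
Proof.
move=> H; have /hermitian_normalmx /orthomx_spectralP {1}-> := H.
by rewrite invmx_unitary // spectral_unitarymx.
Qed.

Lemma diag_comm_map n (T : 'M[C]_n) (l s : 'rV[C]_n) (g : C -> C) :
  diag_mx l *m T = T *m diag_mx s ->
  diag_mx (map_mx g l) *m T = T *m diag_mx (map_mx g s).
Proof.
move=> ET; apply/matrixP => i j; rewrite mul_diag_mx mul_mx_diag !mxE.
have /matrixP /(_ i j) := ET; rewrite mul_diag_mx mul_mx_diag !mxE => e.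
have [->|Tn0] := eqVneq (T i j) 0; first by rewrite !mulr0 mul0r.
have -> : l 0 i = s 0 j by apply: (mulIf Tn0); rewrite e mulrC.
by rewrite mulrC.
Qed.

Lemma fun_unique n (S V : 'M[C]_n) (l s : 'rV[C]_n) (g : C -> C) :
  S \is unitarymx -> V \is unitarymx ->
  S^t* *m diag_mx l *m S = V^t* *m diag_mx s *m V ->
  S^t* *m diag_mx (map_mx g l) *m S = V^t* *m diag_mx (map_mx g s) *m V.
Proof.
move=> Su Vu E.
have ET : diag_mx l *m (S *m V^t*) = (S *m V^t*) *m diag_mx s.
  have := congr1 (fun X => S *m X *m V^t*) E; rewrite /=.
  rewrite !mulmxA (unitary_mul Su) mul1mx -!mulmxA (unitary_mul Vu) mulmx1.
  by rewrite !mulmxA.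
have ETg := diag_comm_map g ET.
move: ETg; set T := S *m V^t* => ETg.
have -> : S = T *m V by rewrite /T -mulmxA unitary_tmul // mulmx1.
have Tu : T \is unitarymx by rewrite /T mul_unitarymx // trmxC_unitary.
rewrite adjM (mulmxA _ T V) -(mulmxA _ (diag_mx _) T) ETg.
by rewrite (mulmxA (V^t* *m T^t*) T) -(mulmxA (V^t*) (T^t*) T) (unitary_tmul Tu) mulmx1.
Qed.

Lemma mxtrace_unitary n (U M : 'M[C]_n) : U \is unitarymx ->
  \tr (U^t* *m M *m U) = \tr M.
Proof. by move=> Uu; rewrite mxtrace_mulC mulmxA unitary_mul // mul1mx. Qed.

Lemma trace_diag_W n (a b : 'rV[C]_n) (W : 'M[C]_n) :
  \tr (diag_mx a *m W *m diag_mx b *m W^t*) =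
  \sum_i \sum_j a 0 i * b 0 j * (W i j * (W i j)^*).
Proof.
rewrite /mxtrace; apply: eq_bigr => i _.
rewrite !mxE; apply: eq_bigr => j _.
rewrite mul_mx_diag mul_diag_mx !mxE.
by rewrite -!mulrA; congr (_ * _); rewrite mulrCA.
Qed.

End Gen1.
Section Gen2.
Variable C : numClosedFieldType.

Definition hs n (X Y : 'M[C]_n) := \tr (X *m Y^t*).

Lemma hsE n (X Y : 'M[C]_n) : hs X Y = dotmx (mxvec X) (mxvec Y).
Proof.
rewrite /hs dotmxE /mxtrace mxE (reindex _ (curry_mxvec_bij _ _)) /=.
rewrite (eq_bigr (fun p : 'I_n * 'I_n => X p.1 p.2 * (Y p.1 p.2)^*)); last first.
  by case=> i j _ /=; rewrite !mxE !mxvecE.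
rewrite -(pair_bigA _ (fun i j => X i j * (Y i j)^*)) /=.
apply: eq_bigr => i _; rewrite mxE; apply: eq_bigr => j _.
by rewrite !mxE.
Qed.

Lemma hs_ge0 n (X : 'M[C]_n) : 0 <= hs X X.
Proof. by rewrite hsE dnorm_ge0. Qed.

Lemma hs_CS n (X Y : 'M[C]_n) : `|hs X Y| ^+ 2 <= hs X X * hs Y Y.
Proof. by rewrite !hsE; exact: (CauchySchwarz (@dotmx C _) _ _).1. Qed.

End Gen2.

Section Core.
Variable C : numClosedFieldType.

Lemma diag_mxM n (a b : 'rV[C]_n) :
  diag_mx a *m diag_mx b = diag_mx (\row_k (a 0 k * b 0 k)).
Proof.
apply/matrixP => i j; rewrite mul_diag_mx !mxE.
by case: eqP => [->|_]; rewrite ?mulr1n ?mulr0n ?mulr0.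
Qed.

Lemma hsA n (X Y : 'M[C]_n) : hs X Y = \tr (X *m Y^t*). Proof. by []. Qed.

Lemma core n (A1 A2 C1 C2 X : 'M[C]_n) (sg : 'rV[C]_n) :
  C1^t* = C1 -> C2^t* = C2 -> C1 *m C1 = A1 -> C2 *m C2 = A2 ->
  \tr (A1 *m A1) = 1 -> \tr (A2 *m A2) = 1 ->
  X \is unitarymx -> (forall k, 0 <= sg 0 k) ->
  (A1 *m A2)^t* *m (A1 *m A2) = X^t* *m diag_mx (\row_k (sg 0 k ^+ 2)) *m X ->
  (\sum_k sg 0 k) ^+ 2 <= \tr (A1 *m A2).
Proof.
move=> HC1 HC2 EA1 EA2 T1 T2 Xu sg0 EB.
have HA1 : A1^t* = A1 by rewrite -EA1 adjM HC1.
have HA2 : A2^t* = A2 by rewrite -EA2 adjM HC2.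
set B := A1 *m A2 in EB.
pose N := B *m X^t*.
have NN : N^t* *m N = diag_mx (\row_k (sg 0 k ^+ 2)).
  rewrite /N adjM trmxCK -mulmxA (mulmxA (B^t*)) EB !mulmxA (unitary_mul Xu) mul1mx.
  by rewrite -mulmxA (unitary_mul Xu) mulmx1.
pose c := \row_k (sg 0 k)^-1.
have cc k : (c 0 k)^* = c 0 k.
  by rewrite !mxE geC0_conj // invr_ge0.
have adjc : (diag_mx c)^t* = diag_mx c.
  by rewrite adj_diag; congr diag_mx; apply/rowP => k; rewrite mxE cc.
pose Y := N *m diag_mx c.
pose Z := X^t* *m Y^t*.
have YY : Y^t* *m Y = diag_mx (\row_k (c 0 k * sg 0 k ^+ 2 * c 0 k)).
  by rewrite /Y adjM adjc mulmxA -(mulmxA (diag_mx c)) NN !diag_mxM; congr diag_mx;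
    apply/rowP => k; rewrite !mxE.
have FE : \tr (Z *m B) = \sum_k sg 0 k.
  rewrite /Z -mulmxA mxtrace_mulC -mulmxA -/N /Y adjM adjc -mulmxA NN diag_mxM.
  rewrite mxtrace_diag; apply: eq_bigr => k _; rewrite !mxE.
  have [->|s0] := eqVneq (sg 0 k) 0; first by rewrite invr0 mul0r.
  by rewrite expr2 mulrA mulVf // mul1r.
pose G := Z^t* *m Z.
have GE : G = Y *m Y^t*.
  by rewrite /G /Z adjM !trmxCK (mulmxA (Y *m X)) -(mulmxA Y X) (unitary_mul Xu) mulmx1.
have Gh : G^t* = G by rewrite /G adjM trmxCK.
have GG : G *m G = G.
  rewrite GE mulmxA -(mulmxA Y) YY; congr (_ *m _).
  rewrite /Y -mulmxA diag_mxM; congr (_ *m diag_mx _); apply/rowP => k; rewrite !mxE.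
  have [->|s0] := eqVneq (sg 0 k) 0; first by rewrite invr0 !mul0r.
  by field.
have GZ : G = Z^t* *m Z by [].
have BE : B = A1 *m A2 by [].
clearbody G Z B.
pose M1 := C2 *m Z *m C1.
pose M2 := C2 *m C1.
have E1 : hs M1 M2 = \tr (Z *m B).
  by rewrite /hs /M1 /M2 adjM HC1 HC2 BE -EA1 -EA2 -!mulmxA [LHS]mxtrace_mulC -!mulmxA.
have E2 : hs M2 M2 = \tr (A1 *m A2).
  by rewrite /hs /M2 adjM HC1 HC2 -EA1 -EA2 -!mulmxA [LHS]mxtrace_mulC -!mulmxA.
have E3 : hs M1 M1 = hs (Z *m A1 *m Z^t*) A2.
  by rewrite /hs /M1 HA2 !adjM HC1 HC2 -EA1 -EA2 -!mulmxA [LHS]mxtrace_mulC -!mulmxA.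
have E4 : hs (Z *m A1 *m Z^t*) (Z *m A1 *m Z^t*) = hs (A1 *m G) (G *m A1).
  by rewrite /hs !adjM trmxCK HA1 Gh GZ -!mulmxA [LHS]mxtrace_mulC -!mulmxA.
pose a := \tr (A1 *m A1 *m G).
have E5 : hs (A1 *m G) (A1 *m G) = a.
  rewrite /hs adjM Gh HA1 (mulmxA (A1 *m G)) -(mulmxA A1 G G) GG.
  by rewrite mxtrace_mulC mulmxA.
have E6 : hs (G *m A1) (G *m A1) = a.
  rewrite /hs adjM Gh HA1 -mulmxA mxtrace_mulC -!mulmxA GG.
  by rewrite /a -mulmxA.
have E7 : hs (A1 *m (1%:M - G)) (A1 *m (1%:M - G)) = \tr (A1 *m A1) - a.
  have GB : (1%:M - G)^t* = 1%:M - G by rewrite linearB /= map_mxB adj1 Gh.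
  have GB2 : (1%:M - G) *m (1%:M - G) = 1%:M - G.
    by rewrite mulmxBl mul1mx mulmxBr mulmx1 GG subrr subr0.
  rewrite /hs adjM GB (mulmxA (A1 *m _)) -(mulmxA A1 _ _) GB2.
  rewrite mulmxBr mulmx1 mulmxBl (raddfB (@mxtrace _ _)) /a.
  by rewrite HA1 [X in _ - X = _]mxtrace_mulC mulmxA.
have a0 : 0 <= a by rewrite -E5 hs_ge0.
have a1 : a <= 1 by rewrite -subr_ge0 -T1 -E7 hs_ge0.
pose h1 := hs (Z *m A1 *m Z^t*) (Z *m A1 *m Z^t*).
have h10 : 0 <= h1 by apply: hs_ge0.
have h11 : h1 <= 1.
  rewrite -(expr_le1 (n:=2)) // -(ger0_norm h10) /h1 E4.
  apply: le_trans (hs_CS _ _) _; rewrite E5 E6; exact: mulr_ile1.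
pose T := hs M1 M1.
have T0 : 0 <= T by apply: hs_ge0.
have TT1 : T <= 1.
  rewrite -(expr_le1 (n:=2)) // -(ger0_norm T0) /T E3.
  apply: le_trans (hs_CS _ _) _.
  have -> : hs A2 A2 = 1 by rewrite /hs HA2.
  by rewrite mulr1.
have Q0 : 0 <= hs M2 M2 by apply: hs_ge0.
have sg_ge0 : 0 <= \sum_k sg 0 k by apply: sumr_ge0 => k _.
rewrite -(ger0_norm sg_ge0) -FE -E1 -E2.
apply: le_trans (hs_CS _ _) _.
exact: ler_piMl.
Qed.

End Core.

End HelpersG.

Module HelpersR.
Local Set Implicit Arguments.
Local Unset Strict Implicit.
Section Scal.
Variable R : realType.

Lemma ln_le_sub1 (t : R) : 0 < t -> ln t <= t - 1.
Proof.
move=> t0; have := @le_ln1Dx R (t - 1); rewrite addrCA subrr addr0; apply; lra.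
Qed.

Lemma scal (M p s : R) : 1 <= M -> 0 <= p -> 0 < s -> p <= M * s ->
  p * ln p - p * ln s <= (p - s) + (3 + ln M) * (Num.sqrt p - Num.sqrt s) ^+ 2.
Proof.
move=> M1 p0 s0 pMs.
have lM : 0 <= ln M by apply: ln_ge0.
have ss := sqr_sqrtr (ltW s0).
have ss0 : 0 < Num.sqrt s by rewrite sqrtr_gt0.
have [->|pp] := eqVneq p 0.
  rewrite sqrtr0 !mul0r subrr sub0r sub0r sqrrN ss; nra.
have p0' : 0 < p by rewrite lt_def pp.
have sp := sqr_sqrtr p0.
have sp0 : 0 < Num.sqrt p by rewrite sqrtr_gt0.
pose t := Num.sqrt p / Num.sqrt s.
have t0 : 0 < t by rewrite divr_gt0.
have Ep : Num.sqrt p = t * Num.sqrt s by rewrite /t divfK // gt_eqF.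
have Ep2 : p = t ^+ 2 * s by rewrite -sp Ep exprMn ss.
have Eln : ln p - ln s = 2 * ln t.
  rewrite Ep2 lnM ?posrE ?exprn_gt0 // lnXn // addrK; lra.
have Lt := ln_le_sub1 t0.
have t2M : t ^+ 2 <= M.
  by rewrite -(ler_pM2r s0) -Ep2.
have L2 : 2 * ln t <= ln M.
  have -> : 2 * ln t = ln (t ^+ 2) by rewrite lnXn //; lra.
  by rewrite ler_ln ?posrE ?exprn_gt0 // (lt_le_trans ltr01 M1).
rewrite -mulrBr Eln Ep -{2}[Num.sqrt s]mul1r -mulrBl exprMn ss Ep2.
set L := ln t in Lt L2 *; set K := ln M in lM L2 *.
have key : 2 * t ^+ 2 * L <= t ^+ 2 - 1 + (3 + K) * (t - 1) ^+ 2.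
  have [t1|t1] := lerP t 1.
    have h1 : t ^+ 2 * L <= t ^+ 2 * (t - 1) by rewrite ler_pM2l ?exprn_gt0.
    have h2 : 0 <= K * (t - 1) ^+ 2 by rewrite mulr_ge0 // sqr_ge0.
    have h3 : (t - 1) ^+ 2 * (t - 1) <= 0 by rewrite mulr_ge0_le0 ?sqr_ge0 //; lra.
    nra.
  have L0 : 0 <= L by rewrite /L ln_ge0 // ltW.
  have h1 : L * (t - 1) ^+ 2 <= K / 2 * (t - 1) ^+ 2.
    by rewrite ler_pM2r ?exprn_gt0 ?subr_gt0 //; lra.
  have h2 : L * (2 * t - 1) <= (t - 1) * (2 * t - 1).
    by rewrite ler_pM2r //; lra.
  nra.
nra.
Qed.


Lemma le_sum1 (d : nat) (f : 'I_d -> R) i : (forall j, 0 <= f j) -> f i <= \sum_j f j.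
Proof.
move=> f0; rewrite (bigD1 i) //= lerDl; exact: sumr_ge0.
Qed.

Lemma classical (d : nat) (eps : R) (pr qr sr : 'I_d -> R) (wr : 'I_d -> 'I_d -> R) :
  0 < eps -> eps <= 1 / 2 -> (0 < d)%N ->
  (forall i, 0 <= pr i) -> \sum_i pr i = 1 ->
  (forall j, 0 <= qr j) -> \sum_j qr j = 1 ->
  (forall i j, 0 <= wr i j) -> (forall i, \sum_j wr i j = 1) ->
  (forall j, \sum_i wr i j = 1) ->
  (forall j, sr j = (1 - 2 * eps) * qr j + 2 * eps / d%:R) ->
  (1 - eps) ^+ 2 <= \sum_i \sum_j Num.sqrt (pr i) * Num.sqrt (qr j) * wr i j ->
  \sum_i pr i * ln (pr i) - \sum_i \sum_j pr i * ln (sr j) * wr i j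
    <= 16 * eps * (2 + ln (d%:R / (2 * eps))).
Proof.
move=> e0 e12 d0 p0 p1 q0 q1 w0 wr1 wc1 sE Qh.
have dpos : 0 < d%:R :> R by rewrite ltr0n.
have d1 : 1 <= d%:R :> R by rewrite ler1n.
set M := d%:R / (2 * eps).
have M1 : 1 <= M by rewrite /M ler_pdivlMr ?mul1r; lra.
have lM : 0 <= ln M by apply: ln_ge0.
set K := 3 + ln M.
have c0 : 0 < 2 * eps / d%:R by rewrite divr_gt0 //; lra.
have s_ge j : 2 * eps / d%:R <= sr j.
  rewrite sE lerDr mulr_ge0 //; lra.
have s0 j : 0 < sr j by apply: lt_le_trans (s_ge j).
have p1' i : pr i <= 1 by rewrite -p1; apply: le_sum1.
have pMs i j : pr i <= M * sr j.
  apply: (le_trans (p1' i)); apply: le_trans (ler_wpM2l (le_trans ler01 M1) (s_ge j)).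
  rewrite /M mulrA divfK ?mulfV //; lra.
have ssum : \sum_j sr j = 1.
  rewrite (eq_bigr _ (fun j _ => sE j)) big_split /= -mulr_sumr q1 sumr_const card_ord.
  have -> : (2 * eps / d%:R) *+ d = 2 * eps by rewrite -mulr_natr divfK ?gt_eqF.
  lra.
have E1 : \sum_i pr i * ln (pr i) - \sum_i \sum_j pr i * ln (sr j) * wr i j =
          \sum_i \sum_j wr i j * (pr i * ln (pr i) - pr i * ln (sr j)).
  rewrite -sumrB; apply: eq_bigr => i _.
  rewrite -[X in X - _]mulr1 -(wr1 i) mulr_sumr -sumrB; apply: eq_bigr => j _; ring.
pose BC := \sum_i \sum_j Num.sqrt (pr i) * Num.sqrt (sr j) * wr i j.
have E2 : \sum_i \sum_j wr i j * ((pr i - sr j) + K * (Num.sqrt (pr i) - Num.sqrt (sr j)) ^+ 2)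
          = 2 * K - 2 * K * BC.
  have T i j : wr i j * ((pr i - sr j) + K * (Num.sqrt (pr i) - Num.sqrt (sr j)) ^+ 2)
     = (1 + K) * (pr i * wr i j) + (K - 1) * (sr j * wr i j)
       - 2 * K * (Num.sqrt (pr i) * Num.sqrt (sr j) * wr i j).
    have h1 := sqr_sqrtr (p0 i); have h2 := sqr_sqrtr (ltW (s0 j)).
    rewrite sqrrB h1 h2; ring.
  rewrite (eq_bigr (fun i => (1 + K) * \sum_j pr i * wr i j + (K - 1) * \sum_j sr j * wr i j
       - 2 * K * \sum_j (Num.sqrt (pr i) * Num.sqrt (sr j) * wr i j))); last first.
    by move=> i _; rewrite (eq_bigr _ (fun j _ => T i j)) sumrB big_split /= -!mulr_sumr.
  rewrite sumrB big_split /= -!mulr_sumr.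
  have -> : \sum_i \sum_j pr i * wr i j = 1.
    by rewrite -p1; apply: eq_bigr => i _; rewrite -mulr_sumr wr1 mulr1.
  have -> : \sum_i \sum_j sr j * wr i j = 1.
    rewrite exchange_big /= -ssum; apply: eq_bigr => j _.
    by rewrite -mulr_sumr wc1 mulr1.
  rewrite /BC; ring.
have BCge : (1 - 2 * eps) * (1 - eps) ^+ 2 <= BC.
  apply: le_trans (ler_wpM2l _ Qh) _; first lra.
  rewrite /BC mulr_sumr; apply: ler_sum => i _; rewrite mulr_sumr; apply: ler_sum => j _.
  have sq := sqrtr_ge0 (qr j).
  have hs : (1 - 2 * eps) * Num.sqrt (qr j) <= Num.sqrt (sr j).
    rewrite -[X in X <= _]ger0_norm ?mulr_ge0 //; last lra.
    rewrite -sqrtr_sqr ler_wsqrtr // exprMn sqr_sqrtr // sE.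
    have := q0 j; have h : 0 <= (1 - 2 * eps) * (2 * eps) * qr j.
      by rewrite !mulr_ge0 //; lra.
    move=> _; have := ltW c0; nra.
  have := ler_wpM2l (mulr_ge0 (sqrtr_ge0 (pr i)) (w0 i j)) hs.
  nra.
rewrite E1; apply: le_trans (_ : _ <= \sum_i \sum_j wr i j *
   ((pr i - sr j) + K * (Num.sqrt (pr i) - Num.sqrt (sr j)) ^+ 2)) _.
  apply: ler_sum => i _; apply: ler_sum => j _; apply: ler_wpM2l; first exact: w0.
  exact: scal.
rewrite E2.
have K0 : 0 <= K by rewrite /K; lra.
have hb : 1 - BC <= 4 * eps.
  have : (1 - 2 * eps) * (1 - 2 * eps) <= (1 - 2 * eps) * (1 - eps) ^+ 2.
    apply: ler_wpM2l; first lra.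
    nra.
  nra.
have := ler_wpM2l K0 hb.
have := mulr_ge0 (ltW e0) lM.
rewrite /K; nra.
Qed.

End Scal.

End HelpersR.

Module HelpersM.
Import HelpersG HelpersR.
Local Set Implicit Arguments.
Local Unset Strict Implicit.
Section Main.
Variable R : realType.
Local Notation C := (R[i]).
Local Open Scope sesquilinear_scope.
Local Open Scope complex_scope.

Lemma ge0_C (z : C) : 0 <= z -> z = (complex.Re z)%:C.
Proof. by case: z => a b; rewrite lecE /= => /andP[/eqP -> _]. Qed.

Lemma adjmxE n (A : 'M[C]_n) : adjmx A = A^t*.
Proof. by []. Qed.

Lemma mxfunE n f (A : 'M[C]_n) : mxfun f A = (spectralmx A)^t* *m
  diag_mx (map_mx (fun z : C => (f (complex.Re z))%:C) (spectral_diag A)) *m spectralmx A.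
Proof. by rewrite /mxfun invmx_unitary // spectral_unitarymx. Qed.

Lemma mxfunE' n f (A : 'M[C]_n) : mxfun f A = (spectralmx A)^t* *m
  diag_mx (\row_k (f (complex.Re (spectral_diag A 0 k)))%:C) *m spectralmx A.
Proof.
rewrite mxfunE.
have -> : map_mx (fun z : C => (f (complex.Re z))%:C) (spectral_diag A) =
  \row_k (f (complex.Re (spectral_diag A 0 k)))%:C by apply/rowP => k; rewrite !mxE.
by [].
Qed.

Lemma mxfun_gen n f (A V : 'M[C]_n) (s : 'rV[C]_n) : V \is unitarymx ->
  A = V^t* *m diag_mx s *m V ->
  mxfun f A = V^t* *m diag_mx (map_mx (fun z : C => (f (complex.Re z))%:C) s) *m V.
Proof.
move=> Vu AE.
have An : A \is normalmx.
  by apply/orthomx_spectral_subproof; exists (V, s) => //=; rewrite invmx_unitary.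
rewrite mxfunE; apply: (@fun_unique _ n (spectralmx A) V (spectral_diag A) s (fun z : C => (f (complex.Re z))%:C)); [exact: spectral_unitarymx| exact: Vu|].
by rewrite -invmx_unitary ?spectral_unitarymx // -AE; apply/esym/orthomx_spectralP.
Qed.

Lemma density_spec n (rho : 'M[C]_n) : density rho ->
  [/\ spectralmx rho \is unitarymx,
      rho = (spectralmx rho)^t* *m diag_mx (spectral_diag rho) *m spectralmx rho,
      (forall k, 0 <= spectral_diag rho 0 k) & \sum_k spectral_diag rho 0 k = 1].
Proof.
move=> [[H psd] tr1].
have Uu := spectral_unitarymx rho.
have E := spectral_herm H.
split => //.
  move=> k; have := psd (row k (spectralmx rho)).
  have -> : (row k (spectralmx rho) *m rho *m adjmx (row k (spectralmx rho))) 0 0 =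
            (spectralmx rho *m rho *m (spectralmx rho)^t*) k k.
    rewrite -row_mul !mxE; by apply: eq_bigr => j _; rewrite !mxE.
  rewrite {2}E !mulmxA (unitary_mul Uu) mul1mx -mulmxA (unitary_mul Uu) mulmx1.
  by rewrite mxE eqxx mulr1n.
by rewrite -mxtrace_diag -tr1 {2}E mxtrace_unitary.
Qed.


Lemma trB n (A B : 'M[C]_n) : \tr (A - B) = \tr A - \tr B.
Proof. exact: raddfB. Qed.

Lemma ud_mul n (U : 'M[C]_n) (a b : 'rV[C]_n) : U \is unitarymx ->
  (U^t* *m diag_mx a *m U) *m (U^t* *m diag_mx b *m U) =
  U^t* *m diag_mx (\row_k (a 0 k * b 0 k)) *m U.
Proof.
move=> Uu; rewrite !mulmxA -(mulmxA (U^t* *m diag_mx a) U) (unitary_mul Uu) mulmx1.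
by rewrite -(mulmxA (U^t*) (diag_mx a)) diag_mxM.
Qed.

Lemma ud_adj n (U : 'M[C]_n) (a : 'rV[C]_n) :
  (U^t* *m diag_mx a *m U)^t* = U^t* *m diag_mx (map_mx Num.conj a) *m U.
Proof. by rewrite !adjM trmxCK adj_diag mulmxA. Qed.

Lemma ud_tr n (U : 'M[C]_n) (a : 'rV[C]_n) : U \is unitarymx ->
  \tr (U^t* *m diag_mx a *m U) = \sum_k a 0 k.
Proof. by move=> Uu; rewrite mxtrace_unitary // mxtrace_diag. Qed.

Lemma ud_tr2 n (U V : 'M[C]_n) (a b : 'rV[C]_n) : U \is unitarymx -> V \is unitarymx ->
  \tr ((U^t* *m diag_mx a *m U) *m (V^t* *m diag_mx b *m V)) =
  \sum_i \sum_j a 0 i * b 0 j * ((U *m V^t*) i j * ((U *m V^t*) i j)^*).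
Proof.
move=> Uu Vu; rewrite -trace_diag_W adjM trmxCK.
rewrite -[in LHS](mulmxA (U^t*)) -[in LHS](mulmxA (U^t*)) [in LHS]mxtrace_mulC.
by rewrite !mulmxA.
Qed.

Lemma real_row_adj n (f : 'I_n -> R) :
  map_mx Num.conj (\row_k (f k)%:C : 'rV[C]_n) = \row_k (f k)%:C.
Proof. by apply/rowP => k; rewrite !mxE; exact: conjc_real. Qed.


Lemma main (d : nat) (rho rhohat : 'M[C]_d) (eps : R) :
  density rho -> density rhohat ->
  0 < eps -> eps <= 1 / 2 ->
  1 - fidelity rho rhohat <= eps ->
  DKL rho (depolarize (2 * eps) rhohat)
    <= 16 * eps * (2 + ln (d%:R / (2 * eps))).
Proof.
move=> Drho Dhat e0 e12 Fh.
have [Uu Erho p0 p1] := density_spec Drho.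
have [Vu Ehat q0 q1] := density_spec Dhat.
have mfr f := mxfunE' f rho.
have mfh f := mxfunE' f rhohat.
move: Uu Erho p0 p1 mfr; set U := spectralmx rho; set p := spectral_diag rho.
move=> Uu Erho p0 p1 mfr.
move: Vu Ehat q0 q1 mfh; set V := spectralmx rhohat; set q := spectral_diag rhohat.
move=> Vu Ehat q0 q1 mfh.
have d0 : (0 < d)%N.
  case: (pickP (@predT 'I_d)) => [k _|H0]; first exact: (leq_ltn_trans (leq0n k) (ltn_ord k)).
  by move: p1; rewrite big_pred0 // => /eqP; rewrite eq_sym oner_eq0.
pose pr k := complex.Re (p 0 k).
pose qr k := complex.Re (q 0 k).
have Ep k : p 0 k = (pr k)%:C by apply: ge0_C.
have Eq k : q 0 k = (qr k)%:C by apply: ge0_C.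
have pr0 k : 0 <= pr k by rewrite -ler0c -Ep.
have qr0 k : 0 <= qr k by rewrite -ler0c -Eq.
have pr1 : \sum_k pr k = 1.
  apply: complexI; rewrite rmorph_sum rmorph1 -p1; apply: eq_bigr => k _; by rewrite Ep.
have qr1 : \sum_k qr k = 1.
  apply: complexI; rewrite rmorph_sum rmorph1 -q1; apply: eq_bigr => k _; by rewrite Eq.
have Erp : p = \row_k (pr k)%:C by apply/rowP => k; rewrite mxE Ep.
have Erq : q = \row_k (qr k)%:C by apply/rowP => k; rewrite mxE Eq.
pose W := U *m V^t*.
have Wu : W \is unitarymx by apply: mul_unitarymx; [exact: Uu| rewrite trmxC_unitary; exact: Vu].
have WE : W = U *m V^t* by [].
clearbody W.
pose wr i j := complex.Re (W i j * (W i j)^*).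
have Ew i j : W i j * (W i j)^* = (wr i j)%:C by apply: ge0_C; apply: mul_conjC_ge0.
have wr0 i j : 0 <= wr i j by rewrite -ler0c -Ew mul_conjC_ge0.
have wr1 i : \sum_j wr i j = 1.
  apply: complexI; rewrite rmorph_sum rmorph1.
  have := congr1 (fun M : 'M[C]_d => M i i) (unitary_mul Wu); rewrite !mxE eqxx mulr1n => <-.
  by apply: eq_bigr => j _; rewrite !mxE; exact: (esym (Ew i j)).
have wc1 j : \sum_i wr i j = 1.
  apply: complexI; rewrite rmorph_sum rmorph1.
  have := congr1 (fun M : 'M[C]_d => M j j) (unitary_tmul Wu); rewrite !mxE eqxx mulr1n => <-.
  by apply: eq_bigr => i _; rewrite !mxE mulrC; exact: (esym (Ew i j)).
pose sr j := (1 - 2 * eps) * qr j + 2 * eps / d%:R.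
pose s := \row_j (sr j)%:C : 'rV[C]_d.
have Esig : depolarize (2 * eps) rhohat = V^t* *m diag_mx s *m V.
  have Ds : diag_mx s = ((1 - 2 * eps)%:C) *: diag_mx q + ((2 * eps / d%:R)%:C) *: 1%:M.
    apply/matrixP => i j; rewrite !mxE Eq.
    case: (i == j); rewrite ?mulr1n ?mulr0n ?mulr0 ?addr0 //.
    by rewrite /sr rmorphD rmorphM mulr1.
  rewrite Ds mulmxDr mulmxDl -!scalemxAr -!scalemxAl mulmx1 (unitary_tmul Vu) -Ehat.
  by [].
have mls : mlog (depolarize (2 * eps) rhohat) = V^t* *m diag_mx (\row_j (ln (sr j))%:C) *m V.
  rewrite /mlog (mxfun_gen (@ln R) Vu Esig).
  have -> : map_mx (fun z : C => (ln (complex.Re z))%:C) s = \row_j (ln (sr j))%:C.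
    by apply/rowP => j; rewrite !mxE.
  by [].
have Qh : (1 - eps) ^+ 2 <= \sum_i \sum_j Num.sqrt (pr i) * Num.sqrt (qr j) * wr i j.
  pose A1 := U^t* *m diag_mx (\row_k (Num.sqrt (pr k))%:C) *m U.
  pose A2 := V^t* *m diag_mx (\row_k (Num.sqrt (qr k))%:C) *m V.
  pose C1 := U^t* *m diag_mx (\row_k (Num.sqrt (Num.sqrt (pr k)))%:C) *m U.
  pose C2 := V^t* *m diag_mx (\row_k (Num.sqrt (Num.sqrt (qr k)))%:C) *m V.
  have mA1 : msqrt rho = A1 by rewrite /msqrt mfr.
  have mA2 : msqrt rhohat = A2 by rewrite /msqrt mfh.
  have hC1 : C1^t* = C1 by rewrite /C1 ud_adj real_row_adj.
  have hC2 : C2^t* = C2 by rewrite /C2 ud_adj real_row_adj.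
  have CC1 : C1 *m C1 = A1.
    rewrite /C1 (ud_mul _ _ Uu).
    have -> : \row_k ((\row_k0 (Num.sqrt (Num.sqrt (pr k0)))%:C) 0 k *
                      (\row_k0 (Num.sqrt (Num.sqrt (pr k0)))%:C) 0 k) =
              \row_k (Num.sqrt (pr k))%:C :> 'rV[C]_d.
      by apply/rowP => k; rewrite !mxE -rmorphM -expr2 sqr_sqrtr ?sqrtr_ge0.
    by [].
  have CC2 : C2 *m C2 = A2.
    rewrite /C2 (ud_mul _ _ Vu).
    have -> : \row_k ((\row_k0 (Num.sqrt (Num.sqrt (qr k0)))%:C) 0 k *
                      (\row_k0 (Num.sqrt (Num.sqrt (qr k0)))%:C) 0 k) =
              \row_k (Num.sqrt (qr k))%:C :> 'rV[C]_d.
      by apply/rowP => k; rewrite !mxE -rmorphM -expr2 sqr_sqrtr ?sqrtr_ge0.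
    by [].
  have TA1 : \tr (A1 *m A1) = 1.
    rewrite /A1 (ud_mul _ _ Uu) (ud_tr _ Uu) -p1; apply: eq_bigr => k _.
    by rewrite !mxE -rmorphM -expr2 sqr_sqrtr // Ep.
  have TA2 : \tr (A2 *m A2) = 1.
    rewrite /A2 (ud_mul _ _ Vu) (ud_tr _ Vu) -q1; apply: eq_bigr => k _.
    by rewrite !mxE -rmorphM -expr2 sqr_sqrtr // Eq.
  pose B := A1 *m A2.
  have BE : B = A1 *m A2 by [].
  clearbody B.
  pose H := B^t* *m B.
  have Hh : H \is hermsymmx.
    by rewrite qualifE expr0 scale1r; apply/eqP; rewrite /H adjM trmxCK.
  have Xu := spectral_unitarymx H.
  have EH := spectral_herm Hh.
  move: Xu EH; set X := spectralmx H; set mu := spectral_diag H => Xu EH.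
  have mu0 k : 0 <= mu 0 k.
    have E1 : X *m H *m X^t* = diag_mx mu.
      rewrite EH !mulmxA (unitary_mul Xu) mul1mx -mulmxA (unitary_mul Xu) mulmx1.
      by [].
    have E2 : X *m H *m X^t* = (B *m X^t*)^t* *m (B *m X^t*).
      by rewrite adjM trmxCK /H !mulmxA.
    have := congr1 (fun M : 'M[C]_d => M k k) E1; rewrite E2 /= [in RHS]mxE eqxx mulr1n => <-.
    rewrite mxE; apply: sumr_ge0 => i _; rewrite !mxE mulrC; exact: mul_conjC_ge0.
  pose sg := \row_k (Num.sqrt (complex.Re (mu 0 k)))%:C : 'rV[C]_d.
  have sg0 k : 0 <= sg 0 k by rewrite mxE ler0c sqrtr_ge0.
  have Emu : \row_k (sg 0 k ^+ 2) = mu.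
    apply/rowP => k; rewrite !mxE -rmorphXn sqr_sqrtr; first exact: (esym (ge0_C (mu0 k))).
    by move: (mu0 k); rewrite lecE /= => /andP[_].
  have EB : B^t* *m B = X^t* *m diag_mx (\row_k (sg 0 k ^+ 2)) *m X.
    by rewrite Emu.
  have Fid : fidelity rho rhohat = \sum_k Num.sqrt (complex.Re (mu 0 k)).
    rewrite /fidelity /trace_norm mA1 mA2 -BE -/H /msqrt mxfunE' -/X -/mu (ud_tr _ Xu).
    rewrite (eq_bigr (fun k => (Num.sqrt (complex.Re (mu 0 k)))%:C)); last by move=> k _; rewrite mxE.
    by rewrite -rmorph_sum.
  have := core hC1 hC2 CC1 CC2 TA1 TA2 Xu sg0 (etrans (congr1 (fun M => M^t* *m M) (esym BE)) EB).
  have -> : \sum_k sg 0 k = (fidelity rho rhohat)%:C.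
    by rewrite Fid rmorph_sum; apply: eq_bigr => k _; rewrite mxE.
  rewrite /A1 /A2 (ud_tr2 _ _ Uu Vu) -WE.
  rewrite (eq_bigr (fun i => (\sum_j Num.sqrt (pr i) * Num.sqrt (qr j) * wr i j)%:C)); last first.
    move=> i _; rewrite rmorph_sum; apply: eq_bigr => j _.
    by rewrite !mxE Ew !rmorphM.
  rewrite -rmorph_sum -rmorphXn lecR => h.
  apply: le_trans h.
  have : 0 <= 1 - eps by lra.
  nra.
have -> : DKL rho (depolarize (2 * eps) rhohat) =
   \sum_i pr i * ln (pr i) - \sum_i \sum_j pr i * ln (sr j) * wr i j.
  rewrite /DKL mls /mlog mfr mulmxBr trB.
  rewrite {1 2}Erho (ud_mul _ _ Uu) (ud_tr _ Uu) (ud_tr2 _ _ Uu Vu) -WE.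
  rewrite (eq_bigr (fun k => (pr k * ln (pr k))%:C)); last first.
    by move=> k _; rewrite !mxE Ep rmorphM.
  rewrite [X in _ - X](eq_bigr (fun i => \sum_j (pr i * ln (sr j) * wr i j)%:C)); last first.
    by move=> i _; apply: eq_bigr => j _; rewrite !mxE Ep Ew !rmorphM.
  rewrite [X in _ - X](eq_bigr (fun i => (\sum_j (pr i * ln (sr j) * wr i j))%:C)); last first.
    by move=> i _; rewrite rmorph_sum.
  by rewrite -!rmorph_sum -rmorphB.
by apply: (classical (qr := qr) (sr := sr)).
Qed.

End Main.

End HelpersM.

Theorem theorem2p34 (R : realType) (d : nat) (rho rhohat : 'M[R[i]]_d) (eps : R) :
  density rho -> density rhohat ->
  0 < eps -> eps <= 1 / 2 ->
  1 - fidelity rho rhohat <= eps ->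
  DKL rho (depolarize (2 * eps) rhohat)
    <= 16 * eps * (2 + ln (d%:R / (2 * eps))).
Proof. exact: HelpersM.main. Qed.
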